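(* Consider the standard sequential oligopoly with linear inverse demand $P(X)=a(\overline{X}-X)$, $a>0$, constant marginal cost $c\ge 0$ with $\overline{X}_c:=\overline{X}-\frac{c}{a}>0$, and a random arrival process of firms that never has arrivals after some finite period $T$. Let each firm hold arbitrary beliefs about the future arrival process (possibly different across firms, possibly depending on the observed cumulative quantity, the individual quantities of leaders, and any public or private signals). Then in every equilibrium, for every realization $\boldsymbol{n}=(n_1,\dots,n_T)$ of the arrival process, the total equilibrium quantity and individual quantities are $$X^*=\left[1-\frac{1}{\prod_{s=1}^T(1+n_s)}\right]\overline{X}_c,\qquad x_i^*=\frac{\overline{X}_c}{\prod_{s=1}^t(1+n_s)}\quad\text{for all } t\in\{1,\dots,T\},\ i\in\mathcal{I}_t .$$ In particular, the equilibrium quantity of each firm does not depend on the realized numbers of its followers $(n_{t+1},\dots,n_T)$ nor on the firm's beliefs about them.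
   Context: Firms produce a homogeneous good, each with constant marginal cost $c\ge0$; firm $i$ chooses $x_i\ge 0$, total quantity is $X=\sum_i x_i$, and firm $i$'s profit is $x_i(P(X)-c)$. Firms are partitioned into periods: $\mathcal{I}_t$ is the set of firms arriving in period $t$, $n_t=\#\mathcal{I}_t$. A firm $i\in\mathcal{I}_t$ observes the cumulative quantity $X_{t-1}=\sum_{s<t}\sum_{j\in\mathcal{I}_s}x_j$ of all earlier firms and the number $n_t$, and chooses $x_i$ simultaneously with the other firms in period $t$. In the stochastic version, the sequence $\boldsymbol{n}=(n_1,\dots,n_T)$ is a random variable with arbitrary distribution, and each firm maximizes its expected profit given its beliefs about the future arrivals $(n_{t+1},\dots,n_T)$; equilibrium means subgame perfect (sequentially rational) behavior with interior solutions. *)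

(* Defs.v *)
From Stdlib Require Import Reals Lra Arith.
Open Scope R_scope.

(* Periods are indexed 0 .. T-1 (paper: 1 .. T).  The j-th firm arriving in
   period t (j < n t) is the firm (t, j). *)

(* A realization of the arrival process: n t = number of firms in period t. *)
Definition arrivals := nat -> nat.

(* A history of quantities: h s j = quantity of the j-th firm of period s. *)
Definition history := nat -> nat -> R.

Fixpoint sum_upto (k : nat) (f : nat -> R) : R :=
  match k with O => 0 | S k' => sum_upto k' f + f k' end.

Fixpoint prod_upto (k : nat) (f : nat -> R) : R :=
  match k with O => 1 | S k' => prod_upto k' f * f k' end.

Definition total (T : nat) (n : arrivals) (h : history) : R :=
  sum_upto T (fun s => sum_upto (n s) (fun j => h s j)).

Definition price (a Xbar X : R) : R := a * (Xbar - X).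

(* Information available at period t: arrivals of periods <= t,
   quantities of periods < t. *)
Definition trunc_arr (t : nat) (n : arrivals) : arrivals :=
  fun s => if (s <=? t)%nat then n s else O.
Definition trunc_hist (t : nat) (h : history) : history :=
  fun s j => if (s <? t)%nat then h s j else 0.

(* Realized arrivals up to period t, followed by the (believed) future w. *)
Definition splice (t : nat) (n w : arrivals) : arrivals :=
  fun s => if (s <=? t)%nat then n s else w s.

(* A strategy profile: sigma t j m h = quantity of firm (t, j), given the
   arrivals m of periods <= t and the quantities h of earlier firms. *)
Definition strategy := nat -> nat -> arrivals -> history -> R.

Definition act (sigma : strategy) (t j : nat) (n : arrivals) (h : history) : R :=
  sigma t j (trunc_arr t n) (trunc_hist t h).

Definition step (sigma : strategy) (n : arrivals) (t : nat) (h : history) : history :=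
  fun s j => if (s =? t)%nat then act sigma t j n h else h s j.

Fixpoint play (sigma : strategy) (n : arrivals) (k t : nat) (h : history) : history :=
  match k with
  | O => h
  | S k' => play sigma n k' (S t) (step sigma n t h)
  end.

Definition deviate (sigma : strategy) (n : arrivals) (t i : nat) (x : R) (h : history)
  : history :=
  fun s j => if (s =? t)%nat then (if (j =? i)%nat then x else act sigma t j n h)
             else h s j.

Definition profit (a Xbar c : R) (T : nat) (sigma : strategy) (n : arrivals)
  (t i : nat) (x : R) (h : history) : R :=
  let hf := play sigma n (T - S t) (S t) (deviate sigma n t i x h) in
  x * (price a Xbar (total T n hf) - c).

(* A belief about the future arrivals: an arbitrary (countably supported, hence
   arbitrary, since the space of arrival sequences is countable) probability
   distribution, given as a mixture: scenario k has probability weight k. *)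
Record belief := mkBelief { weight : nat -> R; scenario : nat -> arrivals }.

Definition is_belief (b : belief) : Prop :=
  (forall k, 0 <= weight b k) /\ infinite_sum (weight b) 1.

(* beta t i n h = belief of firm (t, i), which may depend on the whole realized
   arrival sequence n (private/public signals), on the earlier quantities h,
   and may differ across firms. *)
Definition beliefs := nat -> nat -> arrivals -> history -> belief.

Definition expected_profit (a Xbar c : R) (T : nat) (sigma : strategy)
  (n : arrivals) (t i : nat) (b : belief) (x : R) (h : history) (v : R) : Prop :=
  infinite_sum
    (fun k => weight b k * profit a Xbar c T sigma (splice t n (scenario b k)) t i x h) v.

(* Subgame perfect (sequentially rational) equilibrium: at every realization,
   every history, every firm chooses a nonnegative quantity maximizing its
   expected profit among all nonnegative quantities. *)
Definition equilibrium (a Xbar c : R) (T : nat) (sigma : strategy) (beta : beliefs)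
  : Prop :=
  forall (n : arrivals) (t i : nat) (h : history),
    (t < T)%nat -> (i < n t)%nat ->
    let b := beta t i n (trunc_hist t h) in
    0 <= act sigma t i n h /\
    exists v, expected_profit a Xbar c T sigma n t i b (act sigma t i n h) h v /\
      forall x v', 0 <= x -> expected_profit a Xbar c T sigma n t i b x h v' -> v' <= v.

(* Main.v *)
Require Import Defs.
From Stdlib Require Import Reals Lra Lia Arith Classical FunctionalExtensionality.
Open Scope R_scope.

Definition res (Z G : R) : R := if Rle_dec Z 0 then Z else Z / G.
Definition Ycum (n : arrivals) (t : nat) (h : history) : R :=
  sum_upto t (fun s => sum_upto (n s) (fun j => h s j)).
Fixpoint Gp (n : arrivals) (t k : nat) : R :=
  match k with O => 1 | S k' => (1 + INR (n t)) * Gp n (S t) k' end.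

Lemma Gp_ge1 n k : forall t, 1 <= Gp n t k.
Proof.
  induction k as [|k IH]; intro t; simpl; [lra|].
  pose proof (pos_INR (n t)). specialize (IH (S t)). nra.
Qed.

Lemma sum_upto_ext m f g : (forall s, (s < m)%nat -> f s = g s) -> sum_upto m f = sum_upto m g.
Proof.
  induction m as [|m IH]; intro H; simpl; [reflexivity|].
  rewrite IH by (intros; apply H; lia). rewrite H by lia. reflexivity.
Qed.

Lemma sum_upto_const m f c : (forall s, (s < m)%nat -> f s = c) -> sum_upto m f = INR m * c.
Proof.
  induction m as [|m IH]; intro H; cbn [sum_upto]; [simpl; lra|].
  rewrite IH by (intros; apply H; lia). rewrite H by lia. rewrite S_INR. ring.
Qed.

Lemma sum_upto_dev m f x i : (i < m)%nat ->
  sum_upto m (fun j => if (j =? i)%nat then x else f j) = sum_upto m f - f i + x.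
Proof.
  induction m as [|m IH]; intro H; simpl; [lia|].
  destruct (Nat.eq_dec i m) as [->|Hne].
  - rewrite Nat.eqb_refl.
    rewrite (sum_upto_ext m _ f).
    + ring.
    + intros s Hs. destruct (Nat.eqb_spec s m); [lia|reflexivity].
  - rewrite IH by lia. destruct (Nat.eqb_spec m i); [lia|]. ring.
Qed.

Lemma play_split sigma n p : forall q t h,
  play sigma n (p + q) t h = play sigma n q (t + p) (play sigma n p t h).
Proof.
  induction p as [|p IH]; intros q t h; simpl.
  - rewrite Nat.add_0_r. reflexivity.
  - rewrite IH. rewrite Nat.add_succ_r. reflexivity.
Qed.

Lemma play_old sigma n k : forall t h s j, (s < t)%nat -> play sigma n k t h s j = h s j.
Proof.
  induction k as [|k IH]; intros t h s j Hs; simpl; [reflexivity|].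
  rewrite IH by lia. unfold step. destruct (Nat.eqb_spec s t); [lia|reflexivity].
Qed.

Lemma Ycum_step sigma n t h : Ycum n t (step sigma n t h) = Ycum n t h.
Proof.
  unfold Ycum. apply sum_upto_ext. intros s Hs. unfold step.
  destruct (Nat.eqb_spec s t); [lia|reflexivity].
Qed.

Lemma Ycum_S n t h : Ycum n (S t) h = Ycum n t h + sum_upto (n t) (fun j => h t j).
Proof. reflexivity. Qed.

Lemma cournot m (x : nat -> R) Rr :
  (forall i, (i < m)%nat ->
     x i = if Rle_dec (Rr - (sum_upto m x - x i)) 0 then 0 else (Rr - (sum_upto m x - x i)) / 2) ->
  forall i, (i < m)%nat -> x i = if Rle_dec Rr 0 then 0 else Rr / (1 + INR m).
Proof.
  intros H.
  set (Z := Rr - sum_upto m x).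
  assert (Hc : forall i, (i < m)%nat -> (x i = 0 /\ Z <= 0) \/ (x i = Z /\ Z > 0)).
  { intros i Hi. specialize (H i Hi). fold Z in H.
    destruct (Rle_dec (Rr - (sum_upto m x - x i)) 0) as [Hle|Hgt].
    - left. subst Z. lra.
    - right. subst Z. lra. }
  pose proof (pos_INR m) as Hm.
  destruct (Rgt_dec Z 0) as [Zp|Zn].
  - assert (Hall : forall i, (i < m)%nat -> x i = Z).
    { intros i Hi. destruct (Hc i Hi) as [[]|[]]; [lra|auto]. }
    assert (HS : sum_upto m x = INR m * Z) by (apply sum_upto_const; auto).
    assert (HR : Rr = (1 + INR m) * Z) by (assert (HZ : Z = Rr - sum_upto m x) by reflexivity; rewrite HS in HZ; lra).
    intros i Hi. rewrite Hall by auto.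
    destruct (Rle_dec Rr 0); [exfalso; assert (0 < (1 + INR m) * Z) by (apply Rmult_lt_0_compat; lra); lra|]. rewrite HR. field. lra.
  - assert (Hall : forall i, (i < m)%nat -> x i = 0).
    { intros i Hi. destruct (Hc i Hi) as [[]|[]]; [auto|lra]. }
    assert (HS : sum_upto m x = INR m * 0) by (apply sum_upto_const; auto).
    intros i Hi. rewrite Hall by auto.
    destruct (Rle_dec Rr 0); [reflexivity|]. assert (HZ : Z = Rr - sum_upto m x) by reflexivity; rewrite HS in HZ; lra.
Qed.

Lemma cv_const C : Un_cv (fun _ : nat => C) C.
Proof. intros e He. exists O. intros. unfold Rdist. rewrite Rminus_diag, Rabs_R0. lra. Qed.

Lemma isum_scal f l C : infinite_sum f l -> infinite_sum (fun k => f k * C) (l * C).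
Proof.
  intro H. assert (H2 := CV_mult _ _ _ _ H (cv_const C)).
  intros e He. destruct (H2 e He) as [N HN]. exists N. intros k Hk.
  specialize (HN k Hk). simpl in HN. rewrite <- scal_sum. rewrite Rmult_comm. exact HN.
Qed.

Lemma isum_ext f g l : (forall k, f k = g k) -> infinite_sum f l -> infinite_sum g l.
Proof. intros H. replace g with f; auto. apply functional_extensionality; auto. Qed.

Lemma br (w G : nat -> R) a r xs v :
  0 < a -> (forall k, 0 <= w k) -> infinite_sum w 1 -> (forall k, 1 <= G k) ->
  0 <= xs ->
  infinite_sum (fun k => w k * (xs * (a * res (r - xs) (G k)))) v ->
  (forall x v', 0 <= x -> infinite_sum (fun k => w k * (x * (a * res (r - x) (G k)))) v' -> v' <= v) ->
  xs = if Rle_dec r 0 then 0 else r / 2.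
Proof.
  intros Ha Hw Hs HG Hxs Hv Hopt.
  assert (Eneg : forall x, r - x <= 0 ->
     infinite_sum (fun k => w k * (x * (a * res (r - x) (G k)))) (x * (a * (r - x)))).
  { intros x Hx. replace (x * (a * (r - x))) with (1 * (x * (a * (r - x)))) by ring.
    eapply isum_ext; [|apply isum_scal; exact Hs].
    intro k. simpl. unfold res. destruct (Rle_dec (r - x) 0); [reflexivity|lra]. }
  assert (Hmu : {mu | infinite_sum (fun k => w k / G k) mu}).
  { apply Rseries_CV_comp with (Bn := w).
    - intro k. pose proof (HG k). pose proof (Hw k). split.
      + unfold Rdiv. apply Rmult_le_pos; auto. left. apply Rinv_0_lt_compat. lra.
      + unfold Rdiv. rewrite <- (Rmult_1_r (w k)) at 2. apply Rmult_le_compat_l; auto.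
        rewrite <- Rinv_1. apply Rinv_le_contravar; lra.
    - exists 1. exact Hs. }
  destruct Hmu as [mu Hmu].
  assert (mupos : 0 < mu).
  { destruct (classic (forall k, w k = 0)) as [Hz|Hnz].
    - exfalso. assert (infinite_sum w 0).
      { replace 0 with (1 * 0) by ring. eapply isum_ext; [|apply isum_scal; exact Hs].
        intro k. simpl. rewrite Hz. ring. }
      assert (1 = 0) by (eapply uniqueness_sum; eauto). lra.
    - apply not_all_ex_not in Hnz. destruct Hnz as [k0 Hk0].
      assert (Hgr : Un_growing (fun N => sum_f_R0 (fun k => w k / G k) N)).
      { intro N. simpl. pose proof (Hw (S N)). pose proof (HG (S N)).
        assert (0 <= w (S N) / G (S N)).
        { unfold Rdiv. apply Rmult_le_pos; auto. left. apply Rinv_0_lt_compat. lra. }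
        lra. }
      pose proof (growing_ineq _ _ Hgr Hmu k0) as Hle.
      assert (Hle2 : w k0 / G k0 <= sum_f_R0 (fun k => w k / G k) k0).
      { destruct k0; simpl; [lra|].
        assert (0 <= sum_f_R0 (fun k => w k / G k) k0).
        { apply cond_pos_sum. intro k. pose proof (Hw k). pose proof (HG k).
          unfold Rdiv. apply Rmult_le_pos; auto. left. apply Rinv_0_lt_compat. lra. }
        lra. }
      assert (0 < w k0 / G k0).
      { pose proof (Hw k0). pose proof (HG k0). unfold Rdiv. apply Rmult_lt_0_compat.
        lra. apply Rinv_0_lt_compat. lra. }
      lra. }
  assert (Epos : forall x, 0 < r - x ->
     infinite_sum (fun k => w k * (x * (a * res (r - x) (G k)))) (mu * (x * (a * (r - x))))).
  { intros x Hx. eapply isum_ext; [|apply isum_scal; exact Hmu].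
    intro k. simpl. unfold res. destruct (Rle_dec (r - x) 0); [lra|].
    pose proof (HG k). field. lra. }
  destruct (Rle_dec r 0) as [Hr|Hr].
  - destruct (Req_dec xs 0) as [|Hne]; auto. exfalso.
    assert (v = xs * (a * (r - xs))) by (eapply uniqueness_sum; [exact Hv| apply Eneg; lra]).
    assert (Hz := Hopt 0 _ (Rle_refl 0) (Eneg 0 ltac:(lra))).
    assert (0 < xs * (a * (xs - r))).
    { apply Rmult_lt_0_compat; [lra|]. apply Rmult_lt_0_compat; lra. }
    nra.
  - assert (Hh := Hopt (r/2) _ ltac:(lra) (Epos (r/2) ltac:(lra))).
    assert (0 < mu * (r / 2 * (a * (r - r / 2)))).
    { apply Rmult_lt_0_compat; auto. apply Rmult_lt_0_compat; [lra|].
      apply Rmult_lt_0_compat; lra. }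
    destruct (Rle_dec (r - xs) 0) as [Hn|Hp].
    + exfalso.
      assert (v = xs * (a * (r - xs))) by (eapply uniqueness_sum; [exact Hv| apply Eneg; lra]).
      assert (0 <= xs * (a * (xs - r))).
      { apply Rmult_le_pos; [lra|]. apply Rmult_le_pos; lra. }
      nra.
    + assert (v = mu * (xs * (a * (r - xs)))) by (eapply uniqueness_sum; [exact Hv| apply Epos; lra]).
      subst v.
      assert (r / 2 * (r - r / 2) <= xs * (r - xs)).
      { apply Rmult_le_reg_l with (r := mu * a). apply Rmult_lt_0_compat; lra.
        replace (mu * a * (r / 2 * (r - r / 2))) with (mu * (r / 2 * (a * (r - r / 2)))) by ring.
        replace (mu * a * (xs * (r - xs))) with (mu * (xs * (a * (r - xs)))) by ring. exact Hh. }
      assert ((xs - r/2) * (xs - r/2) <= 0) by nra.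
      assert (xs - r/2 = 0) by nra. lra.
Qed.

Lemma act_splice sigma t j n w h : act sigma t j (splice t n w) h = act sigma t j n h.
Proof.
  unfold act. f_equal. apply functional_extensionality. intro s.
  unfold trunc_arr, splice. destruct (s <=? t)%nat; reflexivity.
Qed.

Lemma profit_eq a Xbar c T sigma t k n w i x h :
  0 < a -> (S t + k = T)%nat -> (i < n t)%nat ->
  (forall n h, Xbar - c / a - total T n (play sigma n k (S t) h)
               = res (Xbar - c / a - Ycum n (S t) h) (Gp n (S t) k)) ->
  profit a Xbar c T sigma (splice t n w) t i x h =
  x * (a * res (Xbar - c / a - Ycum n t h
          - (sum_upto (n t) (fun j => act sigma t j n h) - act sigma t i n h) - x)
         (Gp (splice t n w) (S t) k)).
Proof.
  intros Ha Htk Hi HP. unfold profit.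
  replace (T - S t)%nat with k by lia.
  set (n' := splice t n w).
  set (hd := deviate sigma n' t i x h).
  assert (HY : Ycum n' (S t) hd = Ycum n t h + (sum_upto (n t) (fun j => act sigma t j n h) - act sigma t i n h + x)).
  { rewrite Ycum_S. f_equal.
    - unfold Ycum. apply sum_upto_ext. intros s Hs.
      assert (n' s = n s) by (unfold n', splice; destruct (Nat.leb_spec s t); [reflexivity|lia]).
      rewrite H. apply sum_upto_ext. intros j Hj. unfold hd, deviate.
      destruct (Nat.eqb_spec s t); [lia|reflexivity].
    - assert (n' t = n t) by (unfold n', splice; rewrite Nat.leb_refl; reflexivity).
      rewrite H. unfold hd, deviate. rewrite Nat.eqb_refl.
      rewrite (sum_upto_ext _ _ (fun j => if (j =? i)%nat then x else act sigma t j n h)).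
      + apply sum_upto_dev; auto.
      + intros j Hj. unfold n'. rewrite act_splice. reflexivity. }
  specialize (HP n' hd). rewrite HY in HP.
  unfold price.
  replace (a * (Xbar - total T n' (play sigma n' k (S t) hd)) - c)
    with (a * (Xbar - c / a - total T n' (play sigma n' k (S t) hd))) by (field; lra).
  rewrite HP. f_equal. f_equal. f_equal. ring.
Qed.

Lemma act_lemma a Xbar c T sigma beta t k :
  0 < a -> (forall t i n h, is_belief (beta t i n h)) ->
  equilibrium a Xbar c T sigma beta -> (S t + k = T)%nat ->
  (forall n h, Xbar - c / a - total T n (play sigma n k (S t) h)
               = res (Xbar - c / a - Ycum n (S t) h) (Gp n (S t) k)) ->
  forall n h i, (i < n t)%nat ->
  act sigma t i n h = if Rle_dec (Xbar - c / a - Ycum n t h) 0 then 0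
                      else (Xbar - c / a - Ycum n t h) / (1 + INR (n t)).
Proof.
  intros Ha Hb Heq Htk HP n h.
  apply (cournot (n t) (fun j => act sigma t j n h)).
  intros i Hi.
  destruct (Heq n t i h ltac:(lia) Hi) as [Hnn [v [Hv Hopt]]].
  set (b := beta t i n (trunc_hist t h)) in *.
  destruct (Hb t i n (trunc_hist t h)) as [Hw Hs]. fold b in Hw, Hs.
  set (r := Xbar - c / a - Ycum n t h - (sum_upto (n t) (fun j => act sigma t j n h) - act sigma t i n h)).
  replace (Xbar - c / a - Ycum n t h - (sum_upto (n t) (fun j => act sigma t j n h) - act sigma t i n h))
    with r by reflexivity.
  unfold expected_profit in *.
  apply (br (weight b) (fun kk => Gp (splice t n (scenario b kk)) (S t) k) a r _ v Ha Hw Hs).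
  - intro. apply Gp_ge1.
  - exact Hnn.
  - eapply isum_ext; [|exact Hv]. intro kk. simpl.
    rewrite (profit_eq a Xbar c T sigma t k n); auto.
  - intros x v' Hx Hv'. apply (Hopt x v' Hx).
    eapply isum_ext; [|exact Hv']. intro kk. simpl.
    rewrite (profit_eq a Xbar c T sigma t k n); auto.
Qed.

Lemma sum_step sigma n t h :
  sum_upto (n t) (fun j => step sigma n t h t j) = sum_upto (n t) (fun j => act sigma t j n h).
Proof. apply sum_upto_ext. intros. unfold step. rewrite Nat.eqb_refl. reflexivity. Qed.

Lemma Pclaim a Xbar c T sigma beta :
  0 < a -> (forall t i n h, is_belief (beta t i n h)) ->
  equilibrium a Xbar c T sigma beta ->
  forall k t n h, (t + k = T)%nat ->
  Xbar - c / a - total T n (play sigma n k t h) = res (Xbar - c / a - Ycum n t h) (Gp n t k).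
Proof.
  intros Ha Hb Heq k. induction k as [|k IH]; intros t n h Htk.
  - cbn [play Gp]. replace t with T by lia. unfold res. destruct Rle_dec.
    + reflexivity.
    + unfold total, Ycum. rewrite Rdiv_1_r. reflexivity.
  - cbn [play]. rewrite IH by lia.
    rewrite Ycum_S, Ycum_step, sum_step.
    set (Rr := Xbar - c / a - Ycum n t h).
    rewrite (sum_upto_const _ _ (if Rle_dec Rr 0 then 0 else Rr / (1 + INR (n t)))).
    2:{ intros j Hj. apply (act_lemma a Xbar c T sigma beta t k); auto; try lia. intros; apply IH; lia. }
    pose proof (pos_INR (n t)). pose proof (Gp_ge1 n k (S t)).
    cbn [Gp]. unfold res.
    destruct (Rle_dec Rr 0) as [Hr|Hr].
    + replace (Rr - (INR (n t) * 0)) with Rr by ring. replace (Xbar - c / a - (Ycum n t h + INR (n t) * 0)) with Rr by (unfold Rr; ring).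
      destruct Rle_dec; [reflexivity|lra].
    + replace (Xbar - c / a - (Ycum n t h + INR (n t) * (Rr / (1 + INR (n t))))) with (Rr / (1 + INR (n t)))
        by (unfold Rr; field; lra).
      destruct (Rle_dec (Rr / (1 + INR (n t))) 0) as [Hc|Hc].
      * exfalso. assert (0 < Rr / (1 + INR (n t))) by (unfold Rdiv; apply Rmult_lt_0_compat; [lra|apply Rinv_0_lt_compat; lra]). lra.
      * field. split; lra.
Qed.

Lemma prod_pos (n : arrivals) t : 1 <= prod_upto t (fun s => 1 + INR (n s)).
Proof.
  induction t; simpl; [lra|]. pose proof (pos_INR (n t)). nra.
Qed.

Lemma act_path a Xbar c T sigma beta :
  0 < a -> (forall t i n h, is_belief (beta t i n h)) ->
  equilibrium a Xbar c T sigma beta ->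
  forall n h t i, (t < T)%nat -> (i < n t)%nat ->
  act sigma t i n h = if Rle_dec (Xbar - c / a - Ycum n t h) 0 then 0
                      else (Xbar - c / a - Ycum n t h) / (1 + INR (n t)).
Proof.
  intros Ha Hb Heq n h t i Ht Hi.
  apply (act_lemma a Xbar c T sigma beta t (T - S t)); auto; try lia.
  intros. apply (Pclaim a Xbar c T sigma beta); auto. lia.
Qed.

Lemma Ypath a Xbar c T sigma beta :
  0 < a -> 0 < Xbar - c / a -> (forall t i n h, is_belief (beta t i n h)) ->
  equilibrium a Xbar c T sigma beta ->
  forall n t, (t <= T)%nat ->
  Xbar - c / a - Ycum n t (play sigma n t O (fun _ _ => 0))
  = (Xbar - c / a) / prod_upto t (fun s => 1 + INR (n s)).
Proof.
  intros Ha Hx Hb Heq n t. induction t as [|t IH]; intro Ht.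
  - unfold Ycum. cbn [sum_upto prod_upto]. rewrite Rdiv_1_r. ring.
  - replace (S t) with (t + 1)%nat at 2 by lia. rewrite play_split. simpl (play _ _ 1 _ _).
    replace (t + 1)%nat with (S t) by lia.
    rewrite Ycum_S, Ycum_step, sum_step.
    set (H := play sigma n t 0 (fun _ _ => 0)) in *.
    rewrite (sum_upto_const _ _ (if Rle_dec (Xbar - c / a - Ycum n t H) 0 then 0
                      else (Xbar - c / a - Ycum n t H) / (1 + INR (n t)))).
    2:{ intros j Hj. apply (act_path a Xbar c T sigma beta); auto; lia. }
    specialize (IH ltac:(lia)).
    pose proof (prod_pos n t). pose proof (pos_INR (n t)).
    rewrite IH.
    destruct Rle_dec as [Hc|Hc].
    { exfalso. assert (0 < (Xbar - c / a) / prod_upto t (fun s => 1 + INR (n s))).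
      { unfold Rdiv. apply Rmult_lt_0_compat; [lra|apply Rinv_0_lt_compat; lra]. } lra. }
    cbn [prod_upto].
    replace (Xbar - c / a - (Ycum n t H + INR (n t) * ((Xbar - c / a) / prod_upto t (fun s => 1 + INR (n s)) / (1 + INR (n t)))))
      with ((Xbar - c / a - Ycum n t H) - INR (n t) * ((Xbar - c / a) / prod_upto t (fun s => 1 + INR (n s)) / (1 + INR (n t)))) by ring.
    rewrite IH. field. split; lra.
Qed.

Theorem proposition1 (a Xbar c : R) (T : nat) (sigma : strategy) (beta : beliefs) :
  0 < a -> 0 <= c -> 0 < Xbar - c / a ->
  (forall t i n h, is_belief (beta t i n h)) ->
  equilibrium a Xbar c T sigma beta ->
  forall n : arrivals,
    let hf := play sigma n T O (fun _ _ => 0) in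
    total T n hf = (1 - 1 / prod_upto T (fun s => 1 + INR (n s))) * (Xbar - c / a) /\
    (forall t i : nat, (t < T)%nat -> (i < n t)%nat ->
       hf t i = (Xbar - c / a) / prod_upto (S t) (fun s => 1 + INR (n s))).
Proof.
  intros Ha Hc Hx Hb Heq n hf. split.
  - pose proof (Ypath a Xbar c T sigma beta Ha Hx Hb Heq n T (le_n T)) as HY.
    pose proof (prod_pos n T).
    change (Ycum n T (play sigma n T 0 (fun _ _ => 0))) with (total T n hf) in HY.
    assert (total T n hf = Xbar - c / a - (Xbar - c / a) / prod_upto T (fun s => 1 + INR (n s))) by lra.
    rewrite H0. field. lra.
  - intros t i Ht Hi. unfold hf.
    replace (play sigma n T 0 (fun _ _ => 0)) with (play sigma n (t + S (T - S t)) 0 (fun _ _ => 0)) by (f_equal; lia).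
    rewrite play_split. cbn [play]. rewrite play_old by lia. unfold step at 1.
    rewrite Nat.eqb_refl. simpl (0 + t)%nat.
    rewrite (act_path a Xbar c T sigma beta) by auto.
    rewrite (Ypath a Xbar c T sigma beta Ha Hx Hb Heq n t) by lia.
    pose proof (prod_pos n t). pose proof (pos_INR (n t)).
    destruct Rle_dec as [Hc'|Hc'].
    { exfalso. assert (0 < (Xbar - c / a) / prod_upto t (fun s => 1 + INR (n s))).
      { unfold Rdiv. apply Rmult_lt_0_compat; [lra|apply Rinv_0_lt_compat; lra]. } lra. }
    cbn [prod_upto]. field. split; lra.
Qed.
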